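(* Let $G$ be a graph and let $v\in V(G)$. Then $v$ is Z-irrelevant (i.e., $v$ is not contained in any minimal zero forcing set of $G$) if and only if $v$ is not contained in any minimal fort of $G$.
   Context: Graphs are simple, finite, undirected, with nonempty vertex set; $N(v)$ denotes the open neighborhood of $v$. Zero forcing: starting from an initial set $B$ of blue vertices (all others white), repeatedly apply the color change rule: a blue vertex $u$ changes a white vertex $w$ to blue if $w$ is the only white neighbor of $u$. $B$ is a zero forcing set if eventually all vertices become blue. A minimal zero forcing set is a zero forcing set no proper subset of which is a zero forcing set. A nonempty set $F\subseteq V(G)$ is a fort if for every $v\in V(G)\setminus F$, $|N(v)\cap F|\neq 1$. A minimal fort is a fort that properly contains no other fort. *)

(* Defs.v *)
From mathcomp Require Import all_boot.
Set Implicit Arguments. Unset Strict Implicit. Unset Printing Implicit Defensive.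

Definition simple_graph (T : finType) (e : rel T) : Prop :=
  symmetric e /\ irreflexive e.

Definition nbhd (T : finType) (e : rel T) (v : T) : {set T} := [set w | e v w].

(* One application of the color change rule: blue u forces white w when w is
   the only white neighbour of u. *)
Definition forces (T : finType) (e : rel T) (S : {set T}) (u w : T) : bool :=
  [&& u \in S, w \notin S & nbhd e u :\: S == [set w]].

Inductive zf_reach (T : finType) (e : rel T) (B : {set T}) : {set T} -> Prop :=
| zf_start : zf_reach e B B
| zf_step S u w : zf_reach e B S -> forces e S u w -> zf_reach e B (w |: S).

Definition zero_forcing_set (T : finType) (e : rel T) (B : {set T}) : Prop :=
  zf_reach e B [set: T].

Definition minimal_zero_forcing_set (T : finType) (e : rel T) (B : {set T}) : Prop :=
  zero_forcing_set e B /\ forall B' : {set T}, B' \proper B -> ~ zero_forcing_set e B'.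

Definition Z_irrelevant (T : finType) (e : rel T) (v : T) : Prop :=
  forall B : {set T}, minimal_zero_forcing_set e B -> v \notin B.

Definition fort (T : finType) (e : rel T) (F : {set T}) : Prop :=
  F != set0 /\ forall v, v \notin F -> #|nbhd e v :&: F| != 1.

Definition minimal_fort (T : finType) (e : rel T) (F : {set T}) : Prop :=
  fort e F /\ forall F' : {set T}, F' \proper F -> ~ fort e F'.

(* Main.v *)
From Stdlib Require Import Classical.
Require Import Defs.
From mathcomp Require Import all_boot.

Section S.
Variables (T : finType) (e : rel T).

Lemma minimal_sub (P : {set T} -> Prop) n : forall A : {set T}, #|A| <= n -> P A ->
  exists2 B : {set T}, B \subset A & (P B /\ forall B' : {set T}, B' \proper B -> ~ P B').
Proof.
elim: n => [|n IH] A hA PA.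
  exists A => //; split => // B' hB' PB'.
  by have := proper_card hB'; rewrite ltnNge (leq_trans hA (leq0n _)).
case: (classic (exists B' : {set T}, B' \proper A /\ P B')) => [[B' [hB' PB']]|hn].
  have := proper_card hB' => hc.
  have [C hC PC] := IH B' (leq_trans hc hA) PB'.
  exists C => //; exact: subset_trans hC (proper_sub hB').
exists A => //; split => // B' hB' PB'; apply: hn; by exists B'.
Qed.

Lemma reach_disj B F S : zf_reach e B S -> fort e F ->
  (forall x, x \in B -> x \notin F) -> forall x, x \in S -> x \notin F.
Proof.
move=> hr [_ hF] hB; elim: hr => // S0 u w _ IH /and3P [uS wS /eqP hN] x.
rewrite in_setU1 => /orP [/eqP ->|]; last exact: IH.
apply/negP => wF.
have uF : u \notin F by apply: IH.
move: hN; rewrite /nbhd => hN.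
have := hF u uF; rewrite /nbhd (_ : [set w0 | e u w0] :&: F = [set w]) ?cards1 //.
apply/setP => y; rewrite !inE.
apply/andP/eqP => [[yN yF]|->].
  apply/set1P; rewrite -hN !inE; apply/andP; split => //; apply/negP => yS.
  by move: (IH y yS); rewrite yF.
split => //; have : w \in [set w] by rewrite in_set1.
by rewrite -hN !inE => /andP [].
Qed.

Lemma zfs_meets B F : zero_forcing_set e B -> fort e F -> exists2 x, x \in B & x \in F.
Proof.
move=> hz hf; case: (classic (exists2 x, x \in B & x \in F)) => // hn.
have hB : forall x, x \in B -> x \notin F.
  by move=> x xB; apply/negP => xF; apply: hn; exists x.
have hd := reach_disj _ _ _ hz hf hB.
case: hf => /set0Pn [x xF] _.
by move: (hd x (in_setT x)); rewrite xF.
Qed.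

Lemma closure B n : forall S, #|~: S| <= n -> zf_reach e B S ->
  exists S', [/\ zf_reach e B S', S \subset S' &
     forall u w, ~~ forces e S' u w].
Proof.
elim: n => [|n IH] S hS hr.
  exists S; split => // u w; apply/negP => /and3P [_ wS _].
  move: hS; rewrite leqn0 cards_eq0 => /eqP hS.
  by move: wS; rewrite -in_setC hS inE.
case: (boolP [exists u, exists w, forces e S u w]) => [/existsP [u /existsP [w hf]]|hn].
  have wS : w \notin S by case/and3P: hf.
  have hc : #|~: (w |: S)| <= n.
    have : #|~: S| = (w \in ~: S) + #|(~: S) :\ w| := cardsD1 w (~: S).
    rewrite inE wS (_ : (~: S) :\ w = ~: (w |: S)) => [h|].
      by move: hS; rewrite h add1n ltnS.
    by apply/setP => y; rewrite !inE negb_or andbC.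
  have [S' [h1 h2 h3]] := IH _ hc (zf_step hr hf).
  exists S'; split => //; exact: subset_trans (subsetUr _ _) h2.
exists S; split => // u w; apply/negP => hf; move/negP: hn; apply.
by apply/existsP; exists u; apply/existsP; exists w.
Qed.

Lemma closed_fort S : (forall u w, ~~ forces e S u w) -> S != setT -> fort e (~: S).
Proof.
move=> hc hT; split.
  apply/set0Pn; case: (pickP [pred x | x \notin S]) => [x /= xS|h].
    by exists x; rewrite inE.
  exfalso; by move/negP: hT; apply; apply/eqP/setP => x; move: (h x); rewrite /= inE => /negbFE.
move=> u; rewrite inE negbK => uS; apply/negP => /cards1P [w hw].
move: (hc u w); rewrite /forces uS /=.
have hD : nbhd e u :\: S = nbhd e u :&: ~: S by rewrite setDE.
have : w \in nbhd e u :&: ~: S by rewrite hw in_set1.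
rewrite inE inE => /andP [_ hwS]; move: hwS; rewrite inE => ->; by rewrite hD hw eqxx.
Qed.

Lemma meets_zfs (B : {set T}) : (forall F : {set T}, fort e F -> exists2 x, x \in B & x \in F) ->
  zero_forcing_set e B.
Proof.
move=> hm.
have [S' [h1 h2 h3]] := closure B #|~: B| B (leqnn _) (zf_start e B).
case: (boolP (S' == setT)) => [/eqP hT|hT]; first by rewrite /zero_forcing_set -hT.
have [x xB] := hm _ (closed_fort _ h3 hT).
by rewrite inE (subsetP h2 _ xB).
Qed.

Lemma zfs_notmeets (B : {set T}) : ~ zero_forcing_set e B ->
  exists F : {set T}, fort e F /\ forall x, x \in B -> x \notin F.
Proof.
move=> hn.
have [S' [h1 h2 h3]] := closure B #|~: B| B (leqnn _) (zf_start e B).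
case: (boolP (S' == setT)) => [/eqP hT|hT].
  by case: hn; rewrite /zero_forcing_set -hT.
exists (~: S'); split; first exact: closed_fort _ h3 hT.
by move=> x xB; rewrite inE negbK (subsetP h2 _ xB).
Qed.

End S.

Theorem proposition1p6 (T : finType) (e : rel T) (v : T) :
  simple_graph e ->
  Z_irrelevant e v <-> (forall F : {set T}, minimal_fort e F -> v \notin F).
Proof.
move=> _; split.
  move=> hZ F [hF hmin]; apply/negP => vF.
  pose B := (~: F) :|: [set v].
  have hB : zero_forcing_set e B.
    apply: meets_zfs => F' hF'.
    case: (boolP (F' \subset F)) => [hs|/subsetPn [x xF' xF]].
      case: (boolP (F' \proper F)) => [hp|hp]; first by case: (hmin _ hp).
      have -> : F' = F.
        by apply/eqP; rewrite eqEproper hs /=; move: hp; rewrite /proper hs /= => ->.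
      by exists v => //; rewrite !inE eqxx orbT.
    by exists x => //; rewrite !inE xF.
  have [B0 hs [hz hm]] := minimal_sub _ (@zero_forcing_set T e) _ _ (leqnn #|B|) hB.
  have [x xB0 xF] := zfs_meets _ _ _ _ hz hF.
  have hv := hZ B0 (conj hz hm).
  move: (subsetP hs x xB0); rewrite !inE xF /= => /eqP ex.
  by move: hv; rewrite -ex xB0.
move=> hF B [hz hm]; apply/negP => vB.
have hp : B :\ v \proper B by rewrite properD1.
have [F' [hF' hd]] := zfs_notmeets _ _ _ (hm _ hp).
have [F hs [hfF hmF]] := minimal_sub _ (@fort T e) _ _ (leqnn #|F'|) hF'.
have [x xB xF] := zfs_meets _ _ _ _ hz hfF.
have xF' := subsetP hs x xF.
case: (boolP (x == v)) => [/eqP ex|xv].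
  by move: (hF F (conj hfF hmF)); rewrite -ex xF.
by move: (hd x); rewrite !inE xv xB xF' => /(_ isT).
Qed.
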